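(* A forest (undirected) is unary FA-presentable if and only if it can be obtained from a unary FA-presentable directed forest by replacing its edge relation with the symmetric closure of that relation.
   Context: An (undirected) forest is regarded as a structure $(T,\eta)$ with $\eta$ a symmetric irreflexive edge relation whose graph has no cycles; a directed forest is a directed graph obtained from a forest by directing each edge. A structure $(X,\eta)$ is unary FA-presentable if there exist a regular language $L\subseteq a^*$ and a surjection $\phi:L\to X$ such that $\{(u,v)\in L^2:u\phi=v\phi\}$ and $\{(u,v)\in L^2:(u\phi,v\phi)\in\eta\}$ are regular relations (the words $\mathrm{conv}(u,v)$ over $\{a,\$\}^2$, reading $u,v$ in parallel with the shorter padded by $\$$, form regular languages). *)

(* Defs.v *)
From mathcomp Require Import all_boot.
Set Implicit Arguments. Unset Strict Implicit. Unset Printing Implicit Defensive.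

Record dfa (Sigma : finType) := Dfa {
  dfa_state : finType;
  dfa_start : dfa_state;
  dfa_accept : pred dfa_state;
  dfa_step : dfa_state -> Sigma -> dfa_state }.

Definition dfa_accepts (Sigma : finType) (A : dfa Sigma) (w : seq Sigma) : bool :=
  @dfa_accept Sigma A (foldl (@dfa_step Sigma A) (@dfa_start Sigma A) w).

Definition regular (Sigma : finType) (P : seq Sigma -> Prop) : Prop :=
  exists A : dfa Sigma, forall w, P w <-> dfa_accepts A w.

(* The one-letter alphabet {a} is [unit]; a^n is [nseq n tt].
   The alphabet {a,$} is [bool] with [true] = a and [false] = $.
   conv u v is the word over {a,$}^2 of length max(|u|,|v|) whose i-th letter
   is (a or $, a or $) according to whether i < |u|, resp. i < |v|. *)
Definition conv (u v : seq unit) : seq (bool * bool) :=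
  mkseq (fun i => (i < size u, i < size v)) (maxn (size u) (size v)).

Definition unary_FA_presentable (X : Type) (eta : X -> X -> Prop) : Prop :=
  exists (L : seq unit -> Prop) (phi : {u : seq unit | L u} -> X),
    regular L /\
    (forall x : X, exists u, phi u = x) /\
    regular (fun w => exists u v : {u : seq unit | L u},
               phi u = phi v /\ w = conv (proj1_sig u) (proj1_sig v)) /\
    regular (fun w => exists u v : {u : seq unit | L u},
               eta (phi u) (phi v) /\ w = conv (proj1_sig u) (proj1_sig v)).

Definition is_cycle (X : Type) (eta : X -> X -> Prop) (k : nat) (f : nat -> X) : Prop :=
  2 < k /\
  (forall i j, i < k -> j < k -> f i = f j -> i = j) /\
  (forall i, i < k -> eta (f i) (f ((i.+1) %% k))).

Definition is_forest (X : Type) (eta : X -> X -> Prop) : Prop :=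
  (forall x y, eta x y -> eta y x) /\
  (forall x, ~ eta x x) /\
  (forall k f, ~ is_cycle eta k f).

Definition sym_closure (X : Type) (delta : X -> X -> Prop) : X -> X -> Prop :=
  fun x y => delta x y \/ delta y x.

(* A directed forest: obtained from a forest by directing each edge, i.e.
   each undirected edge carries exactly one direction (delta is asymmetric)
   and its symmetric closure is a forest. *)
Definition is_directed_forest (X : Type) (delta : X -> X -> Prop) : Prop :=
  (forall x y, delta x y -> ~ delta y x) /\ is_forest (sym_closure delta).

(* Main.v *)
Require Import Defs.
From mathcomp Require Import all_boot zify.
From Stdlib Require Import Classical ProofIrrelevance.
Set Implicit Arguments. Unset Strict Implicit. Unset Printing Implicit Defensive.

Lemma unit_seq_eq (u v : seq unit) : size u = size v -> u = v.
Proof. elim: u v => [|[] u IH] [|[] v] //= [] /IH ->. by []. Qed.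

Lemma unit_nseq (u : seq unit) : nseq (size u) tt = u.
Proof. by apply: unit_seq_eq; rewrite size_nseq. Qed.

Lemma foldl_nseq (S A : Type) (f : S -> A -> S) s n x :
  foldl f s (nseq n x) = iter n (fun s => f s x) s.
Proof. by elim: n s => [|n IH] s //=; rewrite IH -iterSr. Qed.

Lemma iter_id (A : Type) n (x : A) : iter n id x = x.
Proof. by elim: n => //= n ->. Qed.

Lemma iter_pair (A B : Type) (f : A -> A) (g : B -> B) n a b :
  iter n (fun p => (f p.1, g p.2)) (a, b) = (iter n f a, iter n g b).
Proof. by elim: n => //= n ->. Qed.

Lemma sig_eq (A : Type) (P : A -> Prop) (a b : {x | P x}) : sval a = sval b -> a = b.
Proof. case: a b => [x px] [y py] /= e; subst y; f_equal; apply: proof_irrelevance. Qed.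

Lemma conv_eq u v : conv u v =
  (if size v <= size u then nseq (size v) (true,true) ++ nseq (size u - size v) (true,false)
   else nseq (size u) (true,true) ++ nseq (size v - size u) (false,true)).
Proof.
rewrite /conv; case: leqP => h; apply: (@eq_from_nth _ (true,true));
  rewrite ?size_mkseq ?size_cat ?size_nseq; try lia;
  move=> i hi; rewrite nth_mkseq // nth_cat size_nseq; case: ifP => hi2;
  rewrite nth_nseq; try (case: ifP => hi3); f_equal; apply/idP/idP; lia.
Qed.

Lemma count_conv1 u v : count (fun p => p.1) (conv u v) = size u.
Proof. rewrite conv_eq; case: leqP => h; rewrite count_cat !count_nseq /=; lia. Qed.
Lemma count_conv2 u v : count (fun p => p.2) (conv u v) = size v.
Proof. rewrite conv_eq; case: leqP => h; rewrite count_cat !count_nseq /=; lia. Qed.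
Definition urec1 (P : nat -> Prop) := exists (Q : finType) (q0 : Q) (f : Q -> Q) (acc : pred Q),
  forall n, P n <-> acc (iter n f q0).

Definition run (Q : Type) (q0 : Q) (fTT fTF fFT : Q -> Q) n m :=
  if m <= n then iter (n - m) fTF (iter m fTT q0) else iter (m - n) fFT (iter n fTT q0).

Definition urec (R : nat -> nat -> Prop) := exists (Q : finType) (q0 : Q) (fTT fTF fFT : Q -> Q)
  (acc : pred Q), forall n m, R n m <-> acc (run q0 fTT fTF fFT n m).

Definition convrel (R : nat -> nat -> Prop) : seq (bool * bool) -> Prop :=
  fun w => exists u v : seq unit, R (size u) (size v) /\ w = conv u v.

Lemma regular_ext (S : finType) (P Q : seq S -> Prop) :
  (forall w, P w <-> Q w) -> regular P -> regular Q.
Proof. move=> e [A hA]; exists A => w; rewrite -hA; exact: iff_sym (e w). Qed.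

Lemma regular_unary (L : seq unit -> Prop) : regular L <-> urec1 (fun n => L (nseq n tt)).
Proof.
split.
- move=> [A hA]; exists (dfa_state A), (dfa_start A), (fun s => dfa_step s tt), (@dfa_accept _ A).
  by move=> n; rewrite hA /dfa_accepts foldl_nseq.
- move=> [Q [q0 [f [acc h]]]]; exists (@Dfa _ Q q0 acc (fun s _ => f s)) => w.
  by rewrite -(unit_nseq w) h /dfa_accepts /= foldl_nseq.
Qed.

Section Conv.
Variables (Q : finType) (q0 : Q) (fTT fTF fFT : Q -> Q) (acc : pred Q).

Definition cstep (s : option (Q * option bool)) (x : bool * bool) : option (Q * option bool) :=
  match s with None => None | Some (q, ph) =>
    match x.1, x.2, ph with
    | true, true, None => Some (fTT q, None)
    | true, false, None | true, false, Some true => Some (fTF q, Some true)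
    | false, true, None | false, true, Some false => Some (fFT q, Some false)
    | _, _, _ => None end end.

Lemma cdead w : foldl cstep None w = None.
Proof. by elim: w. Qed.

Lemma cph1 w q r : foldl cstep (Some (q, Some true)) w = Some r ->
  exists k, w = nseq k (true, false) /\ r = (iter k fTF q, Some true).
Proof.
elim: w q => [|[[] []] w IH] q /=; rewrite ?cdead //.
- by move=> [<-]; exists 0.
- by move/IH => [k [-> ->]]; exists k.+1; rewrite iterSr.
Qed.

Lemma cph2 w q r : foldl cstep (Some (q, Some false)) w = Some r ->
  exists k, w = nseq k (false, true) /\ r = (iter k fFT q, Some false).
Proof.
elim: w q => [|[[] []] w IH] q /=; rewrite ?cdead //.
- by move=> [<-]; exists 0.
- by move/IH => [k [-> ->]]; exists k.+1; rewrite iterSr.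
Qed.

Lemma cph0 w q r : foldl cstep (Some (q, None)) w = Some r ->
  exists a b, (w = nseq a (true,true) ++ nseq b (true,false) /\ r.1 = iter b fTF (iter a fTT q))
   \/ (w = nseq a (true,true) ++ nseq b (false,true) /\ r.1 = iter b fFT (iter a fTT q)).
Proof.
elim: w q => [|[[] []] w IH] q /=; rewrite ?cdead //.
- by move=> [<-]; exists 0, 0; left.
- move/IH => [a [b [[-> ->]|[-> ->]]]]; exists a.+1, b; rewrite iterSr; [left|right]; done.
- by move/cph1 => [k [-> ->]]; exists 0, k.+1; left; rewrite iterSr.
- by move/cph2 => [k [-> ->]]; exists 0, k.+1; right; rewrite iterSr.
Qed.

Lemma crunTT a q : foldl cstep (Some (q, None)) (nseq a (true,true)) = Some (iter a fTT q, None).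
Proof. by elim: a q => [|a IH] q //=; rewrite IH -iterSr iterS. Qed.

Lemma crunTF b q ph : ph != Some false ->
  exists ph', foldl cstep (Some (q, ph)) (nseq b (true,false)) = Some (iter b fTF q, ph').
Proof.
elim: b q ph => [|b IH] q ph hph /=; first by exists ph.
case: ph hph => [[]|] // _ /=; have [ph' ->] := IH (fTF q) (Some true) isT; by rewrite -iterSr iterS; exists ph'.
Qed.

Lemma crunFT b q ph : ph != Some true ->
  exists ph', foldl cstep (Some (q, ph)) (nseq b (false,true)) = Some (iter b fFT q, ph').
Proof.
elim: b q ph => [|b IH] q ph hph /=; first by exists ph.
case: ph hph => [[]|] // _ /=; have [ph' ->] := IH (fFT q) (Some false) isT; by rewrite -iterSr iterS; exists ph'.
Qed.

Definition cdfa := @Dfa _ (option (Q * option bool) : finType) (Some (q0, None))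
  (fun s => if s is Some (q, _) then acc q else false) cstep.

Lemma cdfa_run u v : exists ph,
  foldl cstep (Some (q0, None)) (conv u v) = Some (run q0 fTT fTF fFT (size u) (size v), ph).
Proof.
rewrite conv_eq /run; case: leqP => h; rewrite foldl_cat crunTT.
- exact: crunTF.
- exact: crunFT.
Qed.

End Conv.

Lemma regular_convrel R : regular (convrel R) <-> urec R.
Proof.
split.
- move=> [A hA]; exists (dfa_state A), (dfa_start A), (fun s => dfa_step s (true,true)),
    (fun s => dfa_step s (true,false)), (fun s => dfa_step s (false,true)), (@dfa_accept _ A).
  move=> n m; set u := nseq n tt; set v := nseq m tt.
  have -> : run (dfa_start A) (fun s => dfa_step s (true,true)) (fun s => dfa_step s (true,false))
    (fun s => dfa_step s (false,true)) n m = foldl (@dfa_step _ A) (dfa_start A) (conv u v).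
    by rewrite conv_eq /u /v !size_nseq /run; case: leqP => _; rewrite foldl_cat !foldl_nseq.
  rewrite -/(dfa_accepts A _) -hA; split.
  + by move=> hR; exists u, v; rewrite !size_nseq.
  + move=> [u' [v' [hR e]]].
    have h1 := count_conv1 u v; have h2 := count_conv2 u v.
    rewrite e count_conv1 in h1; rewrite e count_conv2 in h2.
    by move: h1 h2; rewrite /u /v !size_nseq => <- <-.
- move=> [Q [q0 [fTT [fTF [fFT [acc h]]]]]]; exists (cdfa q0 fTT fTF fFT acc) => w; split.
  + move=> [u [v [hR ->]]]; rewrite /dfa_accepts /=.
    have [ph ->] := cdfa_run q0 fTT fTF fFT u v; exact/h.
  + rewrite /dfa_accepts /=; case e: foldl => [[q ph]|] // hacc.
    have [a [b [[ew er]|[ew er]]]] := cph0 e; rewrite /= in er; subst q.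
    * exists (nseq (a + b) tt), (nseq a tt); rewrite conv_eq !size_nseq leq_addr addKn ew.
      split=> //; apply/h; rewrite /run leq_addr addKn //.
    * clear e; case: b ew hacc => [|b] ew hacc.
      - exists (nseq a tt), (nseq a tt); rewrite conv_eq !size_nseq leqnn subnn ew.
        split=> //; apply/h; rewrite /run leqnn subnn //.
      - exists (nseq a tt), (nseq (a + b.+1) tt); rewrite conv_eq !size_nseq.
        have hn : (a + b.+1 <= a) = false by apply/negbTE; rewrite -ltnNge; lia.
        rewrite hn addKn ew; split=> //; apply/h; rewrite /run hn addKn //.
Qed.

Lemma urec_ext R S : urec R -> (forall n m, R n m <-> S n m) -> urec S.
Proof.
move=> [Q [q0 [a [b [c [acc h]]]]]] e; exists Q, q0, a, b, c, acc => n m.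
exact: iff_trans (iff_sym (e n m)) (h n m).
Qed.

Lemma urec1_ext R S : urec1 R -> (forall n, R n <-> S n) -> urec1 S.
Proof.
move=> [Q [q0 [a [acc h]]]] e; exists Q, q0, a, acc => n.
exact: iff_trans (iff_sym (e n)) (h n).
Qed.

Lemma run_pair (A B : Type) (a0 : A) (b0 : B) fTT fTF fFT gTT gTF gFT n m :
  run (a0, b0) (fun p => (fTT p.1, gTT p.2)) (fun p => (fTF p.1, gTF p.2))
    (fun p => (fFT p.1, gFT p.2)) n m =
  (run a0 fTT fTF fFT n m, run b0 gTT gTF gFT n m).
Proof. by rewrite /run; case: ifP => _; rewrite !iter_pair. Qed.

Lemma urec_and R S : urec R -> urec S -> urec (fun n m => R n m /\ S n m).
Proof.
move=> [Q [q0 [a [b [c [acc h]]]]]] [Q' [q0' [a' [b' [c' [acc' h']]]]]].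
exists (Q * Q')%type, (q0, q0'), (fun p => (a p.1, a' p.2)), (fun p => (b p.1, b' p.2)),
  (fun p => (c p.1, c' p.2)), (fun p => acc p.1 && acc' p.2) => n m.
rewrite run_pair /= h h'; split; [by case=> -> ->| by case/andP].
Qed.

Lemma urec_or R S : urec R -> urec S -> urec (fun n m => R n m \/ S n m).
Proof.
move=> [Q [q0 [a [b [c [acc h]]]]]] [Q' [q0' [a' [b' [c' [acc' h']]]]]].
exists (Q * Q')%type, (q0, q0'), (fun p => (a p.1, a' p.2)), (fun p => (b p.1, b' p.2)),
  (fun p => (c p.1, c' p.2)), (fun p => acc p.1 || acc' p.2) => n m.
rewrite run_pair /= h h'; split; [by case=> ->; rewrite ?orbT | by case/orP; auto].
Qed.

Lemma urec_swap R : urec R -> urec (fun n m => R m n).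
Proof.
move=> [Q [q0 [a [b [c [acc h]]]]]]; exists Q, q0, a, c, b, acc => n m.
rewrite h /run; case: (leqP n m) => h1; case: (leqP m n) => h2 //; try lia.
have e : n = m by lia.
by rewrite e subnn.
Qed.

Lemma urec_fst P : urec1 P -> urec (fun n m => P n).
Proof.
move=> [Q [q0 [f [acc h]]]]; exists Q, q0, f, f, id, acc => n m.
rewrite h /run; case: leqP => h1; first by rewrite -iterD subnK.
by rewrite iter_id.
Qed.

Lemma urec_snd P : urec1 P -> urec (fun n m => P m).
Proof. by move/urec_fst/urec_swap. Qed.

Lemma iter_const (A : Type) k (c : A) : iter k (fun _ => c) c = c.
Proof. by case: k. Qed.

Lemma urec_lt : urec (fun n m => n < m).
Proof.
exists (bool : finType), false, id, (fun _ => false), (fun _ => true), id => n m.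
rewrite /run; case: leqP => h /=; first by rewrite iter_id iter_const; split=> //; lia.
by case e: (m - n) => [|k]; [lia | split].
Qed.

Lemma urec_eq : urec (fun n m => n = m).
Proof.
exists (bool : finType), false, id, (fun _ => true), (fun _ => true), negb => n m.
rewrite /run; case: leqP => h /=; rewrite iter_id.
- by case e: (n - m) => [|k] /=; split=> //; lia.
- by case e: (m - n) => [|k] /=; split=> //; lia.
Qed.

Lemma urec1_and P S : urec1 P -> urec1 S -> urec1 (fun n => P n /\ S n).
Proof.
move=> [Q [q0 [a [acc h]]]] [Q' [q0' [a' [acc' h']]]].
exists (Q * Q')%type, (q0, q0'), (fun p => (a p.1, a' p.2)), (fun p => acc p.1 && acc' p.2) => n.
rewrite iter_pair /= h h'; split; [by case=> -> ->| by case/andP].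
Qed.

Lemma urec_min R : urec R -> urec1 (fun n => forall j, j < n -> ~ R n j).
Proof.
move=> [Q [q0 [a [b [c [acc h]]]]]].
pose f (p : Q * {set Q}) := (a p.1, [set s | (s == b p.1) || [exists s0 in p.2, s == b s0]]).
exists (Q * {set Q})%type, (q0, set0), f, (fun p : Q * {set Q} => [forall s in p.2, ~~ acc s]) => n.
have inv : forall n, (iter n f (q0, set0)).1 = iter n a q0 /\
   forall s, s \in (iter n f (q0, set0)).2 <-> exists j, j < n /\ s = iter (n - j) b (iter j a q0).
  elim=> [|k [IH1 IH2]] /=; first by split=> // s; rewrite inE; split=> // [[j []]].
  split; first by rewrite IH1.
  move=> s; rewrite inE IH1; split.
  - case/orP => [/eqP ->|/existsP [s0 /andP [/IH2 [j [hj ->]] /eqP ->]]].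
    + by exists k; rewrite subSnn.
    + by exists j; split; [lia | rewrite subSn ?(ltnW hj)].
  - move=> [j [hj ->]]; case: (ltnP j k) => hjk.
    + apply/orP; right; apply/existsP; exists (iter (k - j) b (iter j a q0)).
      by rewrite subSn ?(ltnW hjk) // eqxx andbT; apply/IH2; exists j.
    + have -> : j = k by lia.
      by rewrite subSnn eqxx.
have [_ IH2] := inv n; split.
- move=> H; apply/forallP => s; apply/implyP => /IH2 [j [hj ->]]; apply/negP => hacc.
  by apply: (H j hj); apply/h; rewrite /run ltnW.
- move=> /forallP H j hj /h; rewrite /run ltnW //.
  have := H (iter (n - j) b (iter j a q0)); rewrite (_ : _ \in _); first by move=> /= /negP.
  by apply/IH2; exists j.
Qed.

Definition relL (T : Type) (L : seq unit -> Prop) (phi : {u | L u} -> T) (P : T -> T -> Prop)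
  n m := exists a b : {u | L u}, size (sval a) = n /\ size (sval b) = m /\ P (phi a) (phi b).

Lemma pres_set (T : Type) (L : seq unit -> Prop) (phi : {u | L u} -> T) (P : T -> T -> Prop) w :
  (exists u v : {u | L u}, P (phi u) (phi v) /\ w = conv (sval u) (sval v)) <->
  convrel (relL phi P) w.
Proof.
split.
- move=> [u [v [hP ->]]]; exists (sval u), (sval v); split=> //; by exists u, v.
- move=> [u [v [[a [b [ha [hb hP]]]] ->]]]; exists a, b; split=> //.
  by rewrite (unit_seq_eq ha) (unit_seq_eq hb).
Qed.

Lemma pres_iff (T : Type) (P : T -> T -> Prop) : unary_FA_presentable P <->
  exists (L : seq unit -> Prop) (phi : {u | L u} -> T), regular L /\
    (forall x, exists u, phi u = x) /\ urec (relL phi eq) /\ urec (relL phi P).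
Proof.
split.
- move=> [L [phi [hL [hs [he hP]]]]]; exists L, phi; do 2 split=> //; split;
    apply/regular_convrel.
  + exact: regular_ext (fun w => pres_set phi eq w) he.
  + exact: regular_ext (fun w => pres_set phi P w) hP.
- move=> [L [phi [hL [hs [he hP]]]]]; exists L, phi; do 2 split=> //; split;
    [move/regular_convrel: he | move/regular_convrel: hP].
  + exact: regular_ext (fun w => iff_sym (pres_set phi eq w)).
  + exact: regular_ext (fun w => iff_sym (pres_set phi P w)).
Qed.

Lemma is_forest_ext (T : Type) (R S : T -> T -> Prop) :
  (forall x y, R x y <-> S x y) -> is_forest R -> is_forest S.
Proof.
move=> e [h1 [h2 h3]]; split; [|split].
- by move=> x y /e /h1 /e.
- by move=> x /e /h2.
- move=> k f [hk [hi hc]]; apply: (h3 k f); split=> //; split=> // i /hc /e //.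
Qed.

Lemma forward (T : Type) (eta : T -> T -> Prop) : is_forest eta -> unary_FA_presentable eta ->
  exists delta : T -> T -> Prop,
     is_directed_forest delta /\ unary_FA_presentable delta /\
     (forall x y, eta x y <-> sym_closure delta x y).
Proof.
move=> hF; have [esym [eirr _]] := hF.
move=> /pres_iff [L [phi [hL [hs [he hE]]]]].
have hLn : urec1 (fun n => L (nseq n tt)) by apply/regular_unary.
pose Lmin n := L (nseq n tt) /\ forall j, j < n -> ~ relL phi eq n j.
have hLmin : urec1 Lmin := urec1_and hLn (urec_min he).
pose L' (u : seq unit) := Lmin (size u).
have L'L : forall u, L' u -> L u by move=> u [h _]; rewrite -(unit_nseq u).
pose phi' (u : {u | L' u}) := phi (exist L (sval u) (L'L _ (svalP u))).
have uniq : forall a b : {u | L' u}, phi' a = phi' b -> sval a = sval b.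
  move=> a b e; apply: unit_seq_eq.
  case: (ltngtP (size (sval a)) (size (sval b))) => h //; exfalso.
  - apply: ((svalP b).2 _ h); exists (exist L (sval b) (L'L _ (svalP b))), (exist L (sval a) (L'L _ (svalP a))).
    by split=> //; split=> //; exact: (Logic.eq_sym e).
  - apply: ((svalP a).2 _ h); exists (exist L (sval a) (L'L _ (svalP a))), (exist L (sval b) (L'L _ (svalP b))).
    by split=> //; split=> //; exact: e.
have surj : forall x, exists a : {u | L' u}, phi' a = x.
  move=> x; have [u <-] := hs x.
  have : forall n (u : {u | L u}), size (sval u) = n -> exists a : {u | L' u}, phi' a = phi u.
    elim/ltn_ind=> n IH {}u hu.
    case: (classic (exists j, j < n /\ exists v : {u | L u}, size (sval v) = j /\ phi v = phi u)).
    + by move=> [j [hj [v [hv <-]]]]; exact: IH hj v hv.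
    + move=> hno.
      have hL' : L' (sval u).
        split; first by rewrite unit_nseq; exact: (svalP u).
        rewrite hu => j hj [a [b [ha [hb eab]]]]; apply: hno; exists j; split=> //; exists b.
        split=> //; rewrite -eab; congr phi; apply: sig_eq; apply: unit_seq_eq; by rewrite ha hu.
      by exists (exist L' (sval u) hL'); rewrite /phi'; congr phi; apply: sig_eq.
  by move/(_ _ u erefl).
pose delta x y := exists a b : {u | L' u}, phi' a = x /\ phi' b = y /\ eta x y /\
  size (sval a) < size (sval b).
have hsym : forall x y, eta x y <-> sym_closure delta x y.
  move=> x y; split.
  - move=> exy; have [a ea] := surj x; have [b eb] := surj y.
    case: (ltngtP (size (sval a)) (size (sval b))) => h.
    + by left; exists a, b.
    + by right; exists b, a; split=> //; split=> //; split=> //; apply: esym.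
    + exfalso; have : a = b by apply: sig_eq; apply: unit_seq_eq.
      by move=> eab; subst b; subst y; subst x; apply: (eirr _ exy).
  - by case=> [[a [b [_ [_ [h _]]]]]|[a [b [_ [_ [h _]]]]]] //; apply: esym.
exists delta; split; [split|split].
- move=> x y [a [b [ea [eb [_ h1]]]]] [a' [b' [ea' [eb' [_ h2]]]]].
  have e1 : sval a' = sval b by apply: uniq; rewrite ea' eb.
  have e2 : sval b' = sval a by apply: uniq; rewrite eb' ea.
  by rewrite e1 e2 in h2; lia.
- exact: is_forest_ext hsym hF.
- apply/pres_iff; exists L', phi'; split; [|split; [exact: surj|split]].
  + apply/regular_unary; apply: (urec1_ext hLmin) => n; rewrite /L' size_nseq; by [].
  + apply: (urec_ext (urec_and (urec_fst hLmin) urec_eq)) => n m; split.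
    * move=> [hn <-]; have hn' : L' (nseq n tt) by rewrite /L' size_nseq.
      exists (exist L' _ hn'), (exist L' _ hn'); by rewrite /= size_nseq.
    * move=> [a [b [<- [<- /uniq ->]]]]; split=> //; exact: (svalP b).
  + apply: (urec_ext (urec_and (urec_and (urec_fst hLmin) (urec_snd hLmin)) (urec_and hE urec_lt))).
    move=> n m; split.
    * move=> [[hn hm] [[c [d [hc [hd ecd]]]] hnm]].
      have hn' : L' (nseq n tt) by rewrite /L' size_nseq.
      have hm' : L' (nseq m tt) by rewrite /L' size_nseq.
      have e1 : phi' (exist L' _ hn') = phi c.
        rewrite /phi'; congr phi; apply: sig_eq; apply: unit_seq_eq; by rewrite /= size_nseq.
      have e2 : phi' (exist L' _ hm') = phi d.
        rewrite /phi'; congr phi; apply: sig_eq; apply: unit_seq_eq; by rewrite /= size_nseq.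
      exists (exist L' _ hn'), (exist L' _ hm'); rewrite /= !size_nseq; split=> //; split=> //.
      exists (exist L' _ hn'), (exist L' _ hm'); rewrite /= !size_nseq e1 e2; by [].
    * move=> [a [b [<- [<- [a' [b' [ea [eb [exy hlt]]]]]]]]].
      have e1 : sval a' = sval a by apply: uniq.
      have e2 : sval b' = sval b by apply: uniq.
      split; first by split; [exact: (svalP a) | exact: (svalP b)].
      split; last by rewrite -e1 -e2.
      exists (exist L (sval a) (L'L _ (svalP a))), (exist L (sval b) (L'L _ (svalP b))).
      by split=> //; split=> //; exact: exy.
- exact: hsym.
Qed.

Lemma backward (T : Type) (eta : T -> T -> Prop) (delta : T -> T -> Prop) :
  unary_FA_presentable delta -> (forall x y, eta x y <-> sym_closure delta x y) ->
  unary_FA_presentable eta.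
Proof.
move=> /pres_iff [L [phi [hL [hs [he hD]]]]] e; apply/pres_iff; exists L, phi.
do 3 split=> //; apply: (urec_ext (urec_or hD (urec_swap hD))) => n m; split.
- case=> [[a [b [ha [hb h]]]]|[a [b [ha [hb h]]]]]; [exists a, b | exists b, a];
    (split; [|split]) => //; apply/(e _ _); [left|right]; exact: h.
- move=> [a [b [ha [hb /(e _ _) [h|h]]]]]; [left; exists a, b | right; exists b, a]; by [].
Qed.

Theorem theorem6p13 (T : Type) (eta : T -> T -> Prop) :
  is_forest eta ->
  (unary_FA_presentable eta <->
   exists delta : T -> T -> Prop,
     is_directed_forest delta /\ unary_FA_presentable delta /\
     (forall x y, eta x y <-> sym_closure delta x y)).
Proof.
move=> hF; split; first exact: forward.
by move=> [delta [_ [hD e]]]; exact: backward hD e.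
Qed.
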